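(* Let $\theta\colon G\curvearrowright\Omega$ and $\theta'\colon H\curvearrowright\Omega'$ be partial actions of discrete groups on topological spaces with $\theta\approx\theta'$. Then there is a partial action $\gamma$ of $G\times H$ on a topological space such that $\theta\xleftarrow{\approx}\gamma\xrightarrow{\approx}\theta'$, i.e. there are direct dynamical equivalences from $\gamma$ to $\theta$ and from $\gamma$ to $\theta'$.
   Context: For a partial action $\theta\colon G\curvearrowright\Omega$, $\Omega_g$ denotes the domain (open) of $\theta_{g^{-1}}$, so $\theta_g\colon\Omega_{g^{-1}}\to\Omega_g$, and $g.x=\theta_g(x)$. Dynamical equivalence $\theta\approx\theta'$ means: there are a homeomorphism $\varphi\colon\Omega\to\Omega'$ and continuous maps $a\colon\bigcup_{g\in G}\{g\}\times\Omega_{g^{-1}}\to H$, $b\colon\bigcup_{h\in H}\{h\}\times\Omega'_{h^{-1}}\to G$ ($G,H$ discrete) such that for all $g\in G,h\in H,x\in\Omega_{g^{-1}},y\in\Omega'_{h^{-1}}$: (1) $\varphi(x)\in\Omega'_{a(g,x)^{-1}}$ and $\varphi(g.x)=a(g,x).\varphi(x)$; (2) $\varphi^{-1}(y)\in\Omega_{b(h,y)^{-1}}$ and $\varphi^{-1}(h.y)=b(h,y).\varphi^{-1}(y)$; (3) $b(a(g,x),\varphi(x))=g$ and $a(b(h,y),\varphi^{-1}(y))=h$; (4) $a(g'g,x)=a(g',g.x)a(g,x)$ if $g.x\in\Omega_{g'^{-1}}$; (5) $b(h'h,y)=b(h',h.y)b(h,y)$ if $h.y\in\Omega'_{h'^{-1}}$.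 Given a group homomorphism $\Psi\colon G\to H$, a continuous map $\varphi\colon\Omega\to\Omega'$ is $\Psi$-equivariant if $\varphi(\Omega_g)\subseteq\Omega'_{\Psi(g)}$ for all $g$ and $\varphi(g.x)=\Psi(g).\varphi(x)$ for $x\in\Omega_{g^{-1}}$. A pair $(\varphi,\Psi)$ with $\varphi$ $\Psi$-equivariant is a direct dynamical equivalence, written $\theta\xrightarrow{\approx}\theta'$, if (a) $\varphi$ is a homeomorphism, (b) $\Omega_g\cap\Omega_{g'}=\emptyset$ for all $g\ne g'$ with $\Psi(g)=\Psi(g')$, (c) $\Omega'_h=\bigcup_{\Psi(g)=h}\varphi(\Omega_g)$ for all $h\in H$. *)

(* Defs.v *)
From Stdlib Require Import Classical.

Set Implicit Arguments.

Record Group := {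
  gcar :> Type;
  gmul : gcar -> gcar -> gcar;
  gone : gcar;
  ginv : gcar -> gcar;
  gmulA : forall x y z, gmul x (gmul y z) = gmul (gmul x y) z;
  gmul1 : forall x, gmul gone x = x;
  gmulV : forall x, gmul (ginv x) x = gone
}.

Arguments gmul {g}.
Arguments gone {g}.
Arguments ginv {g}.

Definition is_hom {G H : Group} (Psi : G -> H) : Prop :=
  forall g g' : G, Psi (gmul g g') = gmul (Psi g) (Psi g').

Section Prod.
Variables G H : Group.
Definition pmul (p q : G * H) : G * H := (gmul (fst p) (fst q), gmul (snd p) (snd q)).
Definition pone : G * H := (gone, gone).
Definition pinv (p : G * H) : G * H := (ginv (fst p), ginv (snd p)).
Lemma pmulA : forall x y z, pmul x (pmul y z) = pmul (pmul x y) z.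
Proof. intros [] [] []; unfold pmul; simpl; rewrite !gmulA; reflexivity. Qed.
Lemma pmul1 : forall x, pmul pone x = x.
Proof. intros []; unfold pmul, pone; simpl; rewrite !gmul1; reflexivity. Qed.
Lemma pmulV : forall x, pmul (pinv x) x = pone.
Proof. intros []; unfold pmul, pinv, pone; simpl; rewrite !gmulV; reflexivity. Qed.
End Prod.

Definition prodGroup (G H : Group) : Group :=
  {| gcar := (gcar G * gcar H)%type; gmul := @pmul G H; gone := pone G H;
     ginv := @pinv G H; gmulA := @pmulA G H; gmul1 := @pmul1 G H;
     gmulV := @pmulV G H |}.

Record Topology := {
  tcar :> Type;
  is_open : (tcar -> Prop) -> Prop;
  open_full : is_open (fun _ => True);
  open_inter : forall U V, is_open U -> is_open V -> is_open (fun x => U x /\ V x);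
  open_union : forall F : (tcar -> Prop) -> Prop,
      (forall U, F U -> is_open U) -> is_open (fun x => exists U, F U /\ U x)
}.

Arguments is_open {t}.

Definition continuous_on {X Y : Topology} (D : X -> Prop) (f : X -> Y) : Prop :=
  forall V, is_open V -> exists U, is_open U /\ forall x, D x -> (V (f x) <-> U x).

Definition continuous {X Y : Topology} (f : X -> Y) : Prop :=
  @continuous_on X Y (fun _ => True) f.

(* f : D -> H is continuous, where D is a subspace of X and H is discrete
   (i.e. f is locally constant on D) *)
Definition continuous_to_discrete {X : Topology} {K : Type} (D : X -> Prop)
  (f : X -> K) : Prop :=
  forall k, exists U, is_open U /\ forall x, D x -> (f x = k <-> U x).

Definition is_homeo {X Y : Topology} (f : X -> Y) : Prop :=
  continuous f /\
  exists g : Y -> X, continuous g /\ (forall x, g (f x) = x) /\ (forall y, f (g y) = y).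

(* ---------- Partial actions ----------
   pdom g = Omega_g (open), pact g = theta_g : Omega_{g^-1} -> Omega_g
   (a total function, only meaningful on Omega_{g^-1}). *)
Record PartialAction (G : Group) (X : Topology) := {
  pdom : G -> X -> Prop;
  pact : G -> X -> X;
  pdom_open : forall g, is_open (pdom g);
  pdom_one : forall x, pdom gone x;
  pact_one : forall x, pact gone x = x;
  pact_dom : forall g x, pdom (ginv g) x -> pdom g (pact g x);
  pact_cont : forall g, continuous_on (pdom (ginv g)) (pact g);
  pact_comp : forall g h x, pdom (ginv h) x -> pdom (ginv g) (pact h x) ->
      pdom (ginv (gmul g h)) x /\ pact (gmul g h) x = pact g (pact h x)
}.

Arguments pdom {G X}.
Arguments pact {G X}.

Definition dyn_equiv {G H : Group} {X Y : Topology}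
  (th : PartialAction G X) (th' : PartialAction H Y) : Prop :=
  exists (phi : X -> Y) (phiinv : Y -> X) (a : G -> X -> H) (b : H -> Y -> G),
    continuous phi /\ continuous phiinv /\
    (forall x, phiinv (phi x) = x) /\ (forall y, phi (phiinv y) = y) /\
    (forall g, continuous_to_discrete (pdom th (ginv g)) (a g)) /\
    (forall h, continuous_to_discrete (pdom th' (ginv h)) (b h)) /\
    (forall g x, pdom th (ginv g) x ->
       pdom th' (ginv (a g x)) (phi x) /\ phi (pact th g x) = pact th' (a g x) (phi x)) /\
    (forall h y, pdom th' (ginv h) y ->
       pdom th (ginv (b h y)) (phiinv y) /\
       phiinv (pact th' h y) = pact th (b h y) (phiinv y)) /\
    (forall g x, pdom th (ginv g) x -> b (a g x) (phi x) = g) /\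
    (forall h y, pdom th' (ginv h) y -> a (b h y) (phiinv y) = h) /\
    (forall g g' x, pdom th (ginv g) x -> pdom th (ginv g') (pact th g x) ->
       a (gmul g' g) x = gmul (a g' (pact th g x)) (a g x)) /\
    (forall h h' y, pdom th' (ginv h) y -> pdom th' (ginv h') (pact th' h y) ->
       b (gmul h' h) y = gmul (b h' (pact th' h y)) (b h y)).

Definition equivariant {G H : Group} {X Y : Topology}
  (th : PartialAction G X) (th' : PartialAction H Y) (Psi : G -> H) (phi : X -> Y) :=
  continuous phi /\
  (forall g x, pdom th g x -> pdom th' (Psi g) (phi x)) /\
  (forall g x, pdom th (ginv g) x -> phi (pact th g x) = pact th' (Psi g) (phi x)).

Definition direct_equiv_via {G H : Group} {X Y : Topology}
  (th : PartialAction G X) (th' : PartialAction H Y) (phi : X -> Y) (Psi : G -> H) :=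
  is_hom Psi /\ equivariant th th' Psi phi /\
  is_homeo phi /\
  (forall g g' : G, g <> g' -> Psi g = Psi g' ->
     forall x, ~ (pdom th g x /\ pdom th g' x)) /\
  (forall h y, pdom th' h y <-> exists g x, Psi g = h /\ pdom th g x /\ phi x = y).

Definition direct_equiv {G H : Group} {X Y : Topology}
  (th : PartialAction G X) (th' : PartialAction H Y) : Prop :=
  exists phi Psi, direct_equiv_via th th' phi Psi.

(* Main.v *)
Require Import Defs.
From Stdlib Require Import Classical FunctionalExtensionality PropExtensionality.

Lemma gmulrV (G : Group) (x : G) : gmul x (ginv x) = gone.
Proof.
  rewrite <- (gmul1 _ (gmul x (ginv x))).
  rewrite <- (gmulV _ (ginv x)) at 1.
  rewrite <- gmulA. rewrite (gmulA _ (ginv x) x (ginv x)). rewrite gmulV, gmul1.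
  apply gmulV.
Qed.

Lemma gmul1r (G : Group) (x : G) : gmul x gone = x.
Proof. rewrite <- (gmulV _ x), gmulA, gmulrV, gmul1. reflexivity. Qed.

Lemma ginvK (G : Group) (x : G) : ginv (ginv x) = x.
Proof.
  rewrite <- (gmul1r _ (ginv (ginv x))), <- (gmulV _ x), gmulA, gmulV, gmul1.
  reflexivity.
Qed.

Lemma gcancel (G : Group) (u v : G) : gmul u v = gone -> u = ginv v.
Proof.
  intros E. rewrite <- (gmul1r _ u), <- (gmulrV _ v), gmulA, E, gmul1. reflexivity.
Qed.

Lemma gidem (G : Group) (u : G) : gmul u u = u -> u = gone.
Proof.
  intros E. transitivity (gmul (gmul (ginv u) u) u).
  - rewrite gmulV, gmul1. reflexivity.
  - rewrite <- gmulA, E, gmulV. reflexivity.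
Qed.

Lemma ginv1 (G : Group) : ginv (@gone G) = gone.
Proof. symmetry. apply gcancel. apply gmul1. Qed.

Lemma ginv_inj (G : Group) (x y : G) : ginv x = ginv y -> x = y.
Proof. intros E. rewrite <- (ginvK _ x), E, ginvK. reflexivity. Qed.

Theorem proposition3 (G H : Group) (X Y : Topology)
  (th : PartialAction G X) (th' : PartialAction H Y) :
  dyn_equiv th th' ->
  exists (Z : Topology) (ga : PartialAction (prodGroup G H) Z),
    direct_equiv ga th /\ direct_equiv ga th'.
Proof.
  intros (phi & phiinv & a & b & cphi & cphiinv & phK & phiK & ca & cb &
          H1 & H2 & H3a & H3b & H4 & H5).
  assert (a1 : forall x, a gone x = gone).
  { intros x. apply gidem.
    assert (D1 : pdom th (ginv gone) x) by (rewrite ginv1; apply pdom_one).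
    assert (D2 : pdom th (ginv gone) (pact th gone x)) by (rewrite pact_one; exact D1).
    pose proof (H4 gone gone x D1 D2) as E.
    rewrite gmul1, pact_one in E. symmetry; exact E. }
  assert (ainv : forall g x, pdom th (ginv g) x ->
            a (ginv g) (pact th g x) = ginv (a g x)).
  { intros g x D. apply gcancel.
    assert (D2 : pdom th (ginv (ginv g)) (pact th g x))
      by (rewrite ginvK; apply pact_dom; exact D).
    rewrite <- (H4 g (ginv g) x D D2), gmulV. apply a1. }
  set (dom := fun (p : prodGroup G H) (y : X) =>
                pdom th (fst p) y /\ a (ginv (fst p)) y = ginv (snd p)).
  assert (domi : forall g h x, dom (ginv ((g, h) : prodGroup G H)) x <->
                   pdom th (ginv g) x /\ a g x = h).
  { intros g h x. unfold dom. simpl. rewrite !ginvK.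
    tauto. }
  unshelve eexists X, {| pdom := dom; pact := fun p => pact th (fst p) |}.
  -
    intros [g h]. destruct (ca (ginv g) (ginv h)) as [U [oU HU]].
    rewrite ginvK in HU.
    replace (dom (g, h)) with (fun y => pdom th g y /\ U y).
    + apply open_inter; [apply pdom_open | exact oU].
    + apply functional_extensionality; intros y; apply propositional_extensionality.
      unfold dom; simpl. split; intros [A B]; split; auto; apply (HU y A); auto.
  - intros x. unfold dom; simpl. split; [apply pdom_one|].
    rewrite ginv1, ginv1. apply a1.
  - intros x. simpl. apply pact_one.
  - intros [g h] x D. apply domi in D. destruct D as [D E].
    unfold dom; simpl. split; [apply pact_dom; exact D|].
    rewrite ainv by exact D. rewrite E. reflexivity.
  - intros [g h] V oV. destruct (pact_cont th g V oV) as [U [oU HU]].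
    exists U. split; auto. intros x D. apply domi in D. apply HU. apply D.
  - intros [g1 h1] [g2 h2] x D2 D1. simpl in *.
    apply domi in D2. apply domi in D1. destruct D2 as [D2 E2]. destruct D1 as [D1 E1].
    destruct (pact_comp th g1 g2 x D2 D1) as [C1 C2].
    pose proof (proj2 (domi (gmul g1 g2) (gmul h1 h2) x)) as Dg.
    split.
    + apply Dg. split; auto. rewrite (H4 g2 g1 x D2 D1), E1, E2. reflexivity.
    + exact C2.
  - split.
    +
      exists (fun x => x), (fun p : prodGroup G H => fst p).
      split; [intros p q; reflexivity|].
      split.
      { split; [intros V oV; exists V; split; auto; tauto|].
        split.
        - intros [g h] x [A _]. exact A.
        - intros [g h] x D. reflexivity. }
      split.
      { split; [intros V oV; exists V; split; auto; tauto|].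
        exists (fun x => x). split; [intros V oV; exists V; split; auto; tauto|]. auto. }
      split.
      { intros [g h] [g' h'] ne E x [[A B] [A' B']]. simpl in *. subst g'.
        apply ne. f_equal. apply ginv_inj. rewrite <- B, <- B'. reflexivity. }
      intros g y. split.
      * intros D. exists ((g, ginv (a (ginv g) y)) : prodGroup G H), y.
        split; [reflexivity|]. split; [|reflexivity].
        unfold dom. simpl. rewrite !ginvK. auto.
      * intros [[g' h'] [x [E [[A _] F]]]]. simpl in *. subst. exact A.
    +
      exists phi, (fun p : prodGroup G H => snd p).
      split; [intros p q; reflexivity|].
      split.
      { split; [exact cphi|]. split.
        - intros [g h] x [A B]. simpl in *.
          assert (A' : pdom th (ginv (ginv g)) x) by (rewrite ginvK; exact A).
          destruct (H1 (ginv g) x A') as [P _]. rewrite B, ginvK in P. exact P.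
        - intros [g h] x D. apply domi in D. destruct D as [D E].
          simpl. destruct (H1 g x D) as [_ P]. rewrite P, E. reflexivity. }
      split.
      { split; [exact cphi|]. exists phiinv. auto. }
      split.
      { intros [g h] [g' h'] ne E x [[A B] [A' B']]. simpl in *. subst h'.
        apply ne. f_equal.
        assert (P : pdom th (ginv (ginv g)) x) by (rewrite ginvK; exact A).
        assert (P' : pdom th (ginv (ginv g')) x) by (rewrite ginvK; exact A').
        pose proof (H3a (ginv g) x P) as Q. pose proof (H3a (ginv g') x P') as Q'.
        rewrite B in Q. rewrite B' in Q'. apply ginv_inj. rewrite <- Q, <- Q'. reflexivity. }
      intros h y. split.
      * intros D.
        assert (D' : pdom th' (ginv (ginv h)) y) by (rewrite ginvK; exact D).
        destruct (H2 (ginv h) y D') as [P _].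
        exists ((ginv (b (ginv h) y), h) : prodGroup G H), (phiinv y).
        split; [reflexivity|]. split; [|apply phiK].
        unfold dom. simpl. rewrite !ginvK. split; [exact P|].
        apply H3b. exact D'.
      * intros [[g h'] [x [E [[A B] F]]]]. simpl in *. subst.
        assert (A' : pdom th (ginv (ginv g)) x) by (rewrite ginvK; exact A).
        destruct (H1 (ginv g) x A') as [P _]. rewrite B, ginvK in P. exact P.
Qed.
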